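(* Let $K$ be an alphabet space and $\sigma:K\to K^+$ a primitive generalized substitution. Then for every $a\in K$, $\lim_{n\to\infty}|\sigma^n(a)|=\infty$.
   Context: An alphabet space is a compact zero-dimensional metric space $K$ with at least two points; $K^+$ is the set of nonempty finite words over $K$. A generalized substitution is a map $\sigma:K\to K^+$ with $a\mapsto|\sigma(a)|$ continuous and, for each $j$, $a\mapsto$ ($j$-th letter of $\sigma(a)$) continuous on $\{a:|\sigma(a)|\ge j\}$; it is extended to words by concatenation and iterated. $\sigma$ is primitive if for every nonempty open $V\subset K$ there is $j$ such that for all $a\in K$ and all $k\ge j$ some letter of $\sigma^k(a)$ lies in $V$. *)

(* Defs.v *)
From HB Require Import structures.
From mathcomp Require Import all_boot all_order all_algebra.
From mathcomp Require Import all_classical all_reals all_analysis.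
Set Implicit Arguments. Unset Strict Implicit. Unset Printing Implicit Defensive.
Import Order.TTheory GRing.Theory Num.Theory.
Local Open Scope classical_set_scope.

Definition subst_word {K : Type} (sigma : K -> seq K) (w : seq K) : seq K :=
  flatten (map sigma w).

Definition subst_iter {K : Type} (sigma : K -> seq K) (k : nat) (a : K) : seq K :=
  iter k (subst_word sigma) [:: a].

(* Generalized substitution: sigma(a) is a nonempty word, a |-> |sigma a| is
   continuous (nat carries its discrete topology), and for each j the j-th
   letter (0-indexed here) is continuous on {a | |sigma a| > j}. *)
Definition generalized_substitution {K : topologicalType} (sigma : K -> seq K) : Prop :=
  [/\ forall a, (0 < size (sigma a))%N,
      continuous (fun a => size (sigma a)) &
      forall j : nat,
        {within [set a | (j < size (sigma a))%N],
           continuous (fun a => nth a (sigma a) j)}].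

Definition primitive_subst {K : topologicalType} (sigma : K -> seq K) : Prop :=
  forall V : set K, open V -> V !=set0 ->
    exists j : nat, forall (a : K) (k : nat), (j <= k)%N ->
      exists2 x, x \in subst_iter sigma k a & V x.

(* Main.v *)
Require Import Defs.
From HB Require Import structures.
From mathcomp Require Import all_boot all_order all_algebra.
From mathcomp Require Import all_classical all_reals all_analysis.
From mathcomp Require Import zify.
Local Open Scope classical_set_scope.

Lemma sumn_ge (T : eqType) (f : T -> nat) (w : seq T) :
  (forall y, y \in w -> (0 < f y)%N) -> (size w <= sumn (map f w))%N.
Proof.
elim: w => //= x w IH H.
have h1 := H x (mem_head _ _).
have h2 : (size w <= sumn (map f w))%N.
  by apply: IH => y yw; apply: H; rewrite inE yw orbT.
simpl; lia.
Qed.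

Lemma sumn_gt (T : eqType) (f : T -> nat) (w : seq T) x :
  (forall y, y \in w -> (0 < f y)%N) -> x \in w -> (1 < f x)%N ->
  (size w < sumn (map f w))%N.
Proof.
elim: w => //= z w IH H.
rewrite inE => /orP [/eqP -> | xw] hx.
  have h2 : (size w <= sumn (map f w))%N.
    by apply: sumn_ge => y yw; apply: H; rewrite inE yw orbT.
  simpl; lia.
have h1 := H z (mem_head _ _).
have h2 : (size w < sumn (map f w))%N.
  by apply: IH => // y yw; apply: H; rewrite inE yw orbT.
simpl; lia.
Qed.

Lemma sumn_eq (T : eqType) (f : T -> nat) (w : seq T) :
  (forall y, y \in w -> f y = 1%N) -> sumn (map f w) = size w.
Proof.
elim: w => //= x w IH H.
rewrite H ?mem_head // IH ?add1n //.
by move=> y yw; apply: H; rewrite inE yw orbT.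
Qed.

Lemma size_subst_word (K : Type) (sigma : K -> seq K) w :
  size (subst_word sigma w) = sumn (map (fun x => size (sigma x)) w).
Proof. by rewrite /subst_word size_flatten /shape -map_comp. Qed.

Theorem mainTheorem17 (R : realType) (K : pseudoMetricType R)
  (K_hausdorff : hausdorff_space K)
  (K_compact : compact [set: K])
  (K_zerodim : zero_dimensional K)
  (K_two : exists x y : K, x <> y)
  (sigma : K -> seq K)
  (Hsub : generalized_substitution sigma)
  (Hprim : primitive_subst sigma) :
  forall a : K, forall M : nat, exists N : nat, forall n : nat, (N <= n)%N ->
    (M <= size (subst_iter sigma n a))%N.
Proof.
move=> a M.
case: Hsub => Hpos Hcont _.
have iterS' n : subst_iter sigma n.+1 a = subst_word sigma (subst_iter sigma n a).
  by rewrite /subst_iter iterS.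
case: (pselect (exists b, (1 < size (sigma b))%N)) => [[b Hb]|Hno].
- have Wn : nbhs b [set x | size (sigma x) = size (sigma b)].
    have H1 : nbhs (size (sigma b)) [set size (sigma b)] by [].
    exact: (Hcont b _ H1).
  move: Wn; rewrite nbhsE => -[B [oB Bb] BW].
  have [j Hj] := Hprim B oB (ex_intro _ b Bb).
  have key : forall n, (j <= n)%N -> (n - j <= size (subst_iter sigma n a))%N.
    elim=> [|n IH] hn; first by rewrite sub0n.
    case: (leqP j n) => hjn.
      have [x xin Bx] := Hj a n hjn.
      rewrite iterS' size_subst_word.
      have := @sumn_gt _ (fun y => size (sigma y)) _ _ (fun y _ => Hpos y) xin.
      rewrite (BW x Bx) => /(_ Hb) H2.
      rewrite subSn //; exact: leq_ltn_trans (IH hjn) H2.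
    have -> : (n.+1 - j = 0)%N by lia.
    by [].
  exists (j + M) => n hn.
  have hjn : (j <= n)%N by lia.
  have := key n hjn; lia.
- exfalso.
  have one : forall y, size (sigma y) = 1%N.
    move=> y; have := Hpos y; case E: (size (sigma y)) => [|[|k]] //.
    by move=> _; exfalso; apply: Hno; exists y; rewrite E.
  have sz : forall n, size (subst_iter sigma n a) = 1%N.
    elim=> [|n IH] //; rewrite iterS' size_subst_word sumn_eq //.
  have [x [y xy]] := K_two.
  move: K_hausdorff; rewrite open_hausdorff => /(_ x y).
  have xy' : x != y by apply/eqP.
  move=> /(_ xy') [[A B]] /= [xA yB] [oA oB /eqP AB0].
  rewrite !in_setE in xA yB.
  have [jA HA] := Hprim A oA (ex_intro _ x xA).
  have [jB HB] := Hprim B oB (ex_intro _ y yB).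
  set k := maxn jA jB.
  have [u uin Au] := HA a k (leq_maxl _ _).
  have [v vin Bv] := HB a k (leq_maxr _ _).
  have [z Hz] : exists z, subst_iter sigma k a = [:: z].
    move: (sz k); case: (subst_iter sigma k a) => [|z [|]] // _.
    by exists z.
  rewrite Hz mem_seq1 in uin; rewrite Hz mem_seq1 in vin.
  move/eqP: uin => eu; move/eqP: vin => ev.
  subst u v.
  have HAB : (A `&` B) z by split.
  by move: HAB; rewrite AB0.
Qed.
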